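(* Let $X\subset\mathbb{R}^n$ be a subanalytic set and $f\in\mathcal{C}(X)$. Then there exists a subanalytic function $h:X\to(0,+\infty)$ such that $|f(x)|\le h(x)$ for all $x\in X$.
   Context: ''Subanalytic'' means globally subanalytic: definable in the expansion of the real field by all restricted analytic functions (functions $\mathbb{R}^k\to\mathbb{R}$ agreeing on $[-1,1]^k$ with a function analytic on a neighbourhood of $[-1,1]^k$ and vanishing outside it); a function is subanalytic if its graph is; $\log$ is not subanalytic. $\mathcal{C}(X)$ is the $\mathbb{R}$-algebra of real-valued functions on $X$ generated by all subanalytic functions $X\to\mathbb{R}$ and all functions $x\mapsto\log g(x)$ with $g:X\to(0,+\infty)$ subanalytic. *)

(* Defs.v *)
From HB Require Import structures.
From mathcomp Require Import all_boot all_order all_algebra.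
From mathcomp Require Import all_classical all_reals all_analysis.
Set Implicit Arguments. Unset Strict Implicit. Unset Printing Implicit Defensive.
Import Order.TTheory GRing.Theory Num.Theory.
Import numFieldNormedType.Exports.
Local Open Scope classical_set_scope.
Local Open Scope ring_scope.

Section Subanalytic.
Variable R : realType.

Definition restrict k (x : 'I_k.+1 -> R) : 'I_k -> R :=
  fun j => x (lift ord_max j).

Definition ext n (x : 'I_n -> R) (t : R) : 'I_n.+1 -> R :=
  fun i => match unlift ord_max i with Some j => x j | None => t end.

Definition graph k (f : ('I_k -> R) -> R) : set ('I_k.+1 -> R) :=
  [set x | x ord_max = f (restrict x)].

Definition boxsum k (c : ('I_k -> nat) -> R) (a y : 'I_k -> R) (N : nat) : R :=
  \sum_(al : {ffun 'I_k -> 'I_N.+1})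
     c (fun i => nat_of_ord (al i)) * \prod_(i < k) (y i - a i) ^+ (al i).

Definition absboxsum k (c : ('I_k -> nat) -> R) (a y : 'I_k -> R) (N : nat) : R :=
  \sum_(al : {ffun 'I_k -> 'I_N.+1})
     `|c (fun i => nat_of_ord (al i))| * \prod_(i < k) `|y i - a i| ^+ (al i).

(* g is real analytic at a: locally equal to an (absolutely) convergent power series *)
Definition analytic_at k (g : ('I_k -> R) -> R) (a : 'I_k -> R) : Prop :=
  exists r : R, 0 < r /\ exists c : ('I_k -> nat) -> R,
    forall y : 'I_k -> R, (forall i, `|y i - a i| < r) ->
      (exists M : R, forall N, absboxsum c a y N <= M) /\
      (boxsum c a y) @ \oo --> g y.

Definition restricted_analytic k (f : ('I_k -> R) -> R) : Prop :=
  exists g : ('I_k -> R) -> R,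
    (exists e : R, 0 < e /\
       forall a : 'I_k -> R, (forall i, `|a i| < 1 + e) -> analytic_at g a) /\
    (forall x, (forall i, `|x i| <= 1) -> f x = g x) /\
    (forall x, ~ (forall i, `|x i| <= 1) -> f x = 0).

(* Sets definable (with parameters) in R_an = (R,<,+,*, restricted analytic
   functions): the smallest family of subsets of the R^n containing the basic
   relations and closed under boolean operations, substitution of variables
   (products, diagonals, permutations) and projection. *)
Inductive definable : forall n, set ('I_n -> R) -> Prop :=
| def_lt : definable [set x : 'I_2 -> R | x ord0 < x ord_max]
| def_add : definable (graph (fun y : 'I_2 -> R => y ord0 + y ord_max))
| def_mul : definable (graph (fun y : 'I_2 -> R => y ord0 * y ord_max))
| def_const (c : R) : definable (graph (fun _ : 'I_0 -> R => c))
| def_ran k (f : ('I_k -> R) -> R) : restricted_analytic f -> definable (graph f)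
| def_compl n (A : set ('I_n -> R)) : definable A -> definable (~` A)
| def_union n (A B : set ('I_n -> R)) :
    definable A -> definable B -> definable (A `|` B)
| def_subst m n (s : 'I_m -> 'I_n) (A : set ('I_m -> R)) :
    definable A -> definable [set x : 'I_n -> R | A (x \o s)]
| def_proj n (A : set ('I_n.+1 -> R)) :
    definable A -> definable [set x : 'I_n -> R | exists t, A (ext x t)].

Definition subanalytic n (X : set ('I_n -> R)) : Prop := definable X.

(* f : X -> R is subanalytic (values of f outside X are irrelevant) *)
Definition subanalytic_fun n (X : set ('I_n -> R)) (f : ('I_n -> R) -> R) : Prop :=
  definable [set x : 'I_n.+1 -> R | X (restrict x) /\ x ord_max = f (restrict x)].

(* C(X): the R-algebra of functions on X generated by subanalytic functions
   and logs of positive subanalytic functions (functions compared on X). *)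
Inductive inC n (X : set ('I_n -> R)) : (('I_n -> R) -> R) -> Prop :=
| C_sub f : subanalytic_fun X f -> inC X f
| C_log g : subanalytic_fun X g -> (forall x, X x -> 0 < g x) ->
    inC X (fun x => ln (g x))
| C_add f g : inC X f -> inC X g -> inC X (fun x => f x + g x)
| C_mul f g : inC X f -> inC X g -> inC X (fun x => f x * g x)
| C_scale (l : R) f : inC X f -> inC X (fun x => l * f x)
| C_ext f g : inC X f -> (forall x, X x -> f x = g x) -> inC X g.

End Subanalytic.

(* Main.v *)
Set Warnings "-all".
Require Import Defs.
From HB Require Import structures.
From mathcomp Require Import all_boot all_order all_algebra.
From mathcomp Require Import all_classical all_reals all_analysis.
Import Order.TTheory GRing.Theory Num.Theory.
Local Open Scope classical_set_scope.
Local Open Scope ring_scope.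

From mathcomp Require Import lra.
Set Implicit Arguments. Unset Strict Implicit.
Section Helpers.
Variable R : realType.

Lemma ext_max n (x : 'I_n -> R) t : ext x t ord_max = t.
Proof. by rewrite /ext unlift_none. Qed.

Lemma ext_lift n (x : 'I_n -> R) t j : ext x t (lift ord_max j) = x j.
Proof. by rewrite /ext liftK. Qed.

Lemma restrict_ext n (x : 'I_n -> R) t : Defs.restrict (ext x t) = x.
Proof. by apply: funext => j; rewrite /Defs.restrict ext_lift. Qed.

Lemma ext_restrict n (w : 'I_n.+1 -> R) : ext (Defs.restrict w) (w ord_max) = w.
Proof.
apply: funext => i; case: (unliftP ord_max i) => [j|] ->.
  by rewrite ext_lift.
by rewrite ext_max.
Qed.

Lemma def_eq n (A B : set ('I_n -> R)) : definable A -> (forall x, A x <-> B x) -> definable B.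
Proof.
move=> dA AB; have -> : B = A by apply: funext => x; apply: propext; split => /AB.
done.
Qed.

Lemma def_I n (A B : set ('I_n -> R)) : definable A -> definable B -> definable (A `&` B).
Proof.
move=> dA dB; have -> : A `&` B = ~` (~` A `|` ~` B) by rewrite setCU !setCK.
by apply: def_compl; apply: def_union; apply: def_compl.
Qed.

Definition trip (a b y : R) : 'I_3 -> R := ext (ext (ext (fun _ : 'I_0 => 0) a) b) y.

Definition L {m} := @lift m.+1 ord_max.

Definition s1 n : 'I_n.+1 -> 'I_n.+3 := fun i =>
  match unlift ord_max i with Some j => L (L (L j)) | None => L ord_max end.
Definition s2 n : 'I_n.+1 -> 'I_n.+3 := fun i =>
  match unlift ord_max i with Some j => L (L (L j)) | None => ord_max end.
Definition s3 n : 'I_3 -> 'I_n.+3 := fun i =>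
  match unlift ord_max i with
  | None => L (L ord_max)
  | Some j => match unlift ord_max j with
     | None => ord_max
     | Some k => match unlift ord_max k with
        | None => L ord_max
        | Some _ => ord_max end end end.

Lemma s1E n (x : 'I_n -> R) y a b :
  (ext (ext (ext x y) a) b) \o (@s1 n) = ext x a.
Proof.
apply: funext => i; rewrite /comp /s1; case: (unliftP ord_max i) => [j|] ->.
  by rewrite /L !ext_lift.
by rewrite ?unlift_none /L ext_lift !ext_max.
Qed.

Lemma s2E n (x : 'I_n -> R) y a b :
  (ext (ext (ext x y) a) b) \o (@s2 n) = ext x b.
Proof.
apply: funext => i; rewrite /comp /s2; case: (unliftP ord_max i) => [j|] ->.
  by rewrite ?liftK /L !ext_lift.
by rewrite ?unlift_none !ext_max.
Qed.

Lemma s3E n (x : 'I_n -> R) y a b :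
  (ext (ext (ext x y) a) b) \o (@s3 n) = trip a b y.
Proof.
apply: funext => i; rewrite /comp /s3 /trip; case: (unliftP ord_max i) => [j|] ->; last first.
  by rewrite ?unlift_none /L !ext_lift !ext_max.
rewrite ?liftK; case: (unliftP ord_max j) => [k|] ->; last first.
  by rewrite ?unlift_none /L !ext_lift !ext_max.
rewrite ?liftK; case: (unliftP ord_max k) => [l|] ->; last first.
  by rewrite ?unlift_none /L !ext_lift !ext_max.
by case: l.
Qed.

Lemma s1max n (x : 'I_n -> R) y a b :
  ext (ext (ext x y) a) b (@s1 n ord_max) = a.
Proof. by rewrite /s1 unlift_none /L ext_lift ext_max. Qed.
Lemma s2max n (x : 'I_n -> R) y a b :
  ext (ext (ext x y) a) b (@s2 n ord_max) = b.
Proof. by rewrite /s2 unlift_none ext_max. Qed.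

Lemma comb n (X : set ('I_n -> R)) g1 g2 h (B : set ('I_3 -> R)) :
  subanalytic_fun X g1 -> subanalytic_fun X g2 -> definable B ->
  (forall x, X x -> forall y, y = h x <-> B (trip (g1 x) (g2 x) y)) ->
  subanalytic_fun X h.
Proof.
move=> d1 d2 dB Hh.
have dP := def_I (def_I (def_subst (@s1 n) d1) (def_subst (@s2 n) d2)) (def_subst (@s3 n) dB).
have := def_proj (def_proj dP).
move=> dS; apply: (def_eq dS) => w /=.
rewrite -(ext_restrict w); set x := Defs.restrict w; set y := w ord_max.
rewrite restrict_ext ext_max.
split.
  move=> [a [b]]; rewrite s1E s2E s3E => -[[[Xx E1] [_ E2]] HB].
  rewrite !restrict_ext s1max s2max in Xx E1 E2.
  by split => //; apply/(Hh x Xx); rewrite -E1 -E2.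
move=> [Xx Ey]; exists (g1 x), (g2 x); rewrite s1E s2E s3E.
split; [split|].
- by rewrite restrict_ext s1max.
- by rewrite restrict_ext s2max.
by apply/(Hh x Xx).
Qed.


Lemma sub_const n (X : set ('I_n -> R)) (c : R) :
  subanalytic X -> subanalytic_fun X (fun _ => c).
Proof.
move=> dX.
have d := def_I (def_subst (fun j : 'I_n => lift ord_max j) dX)
   (def_subst (fun _ : 'I_1 => (ord_max : 'I_n.+1)) (def_const c)).
apply: (def_eq d) => w; split; move=> [H1 H2]; split => //.
Qed.

Definition x0 : 'I_0 -> R := fun _ => 0.

Lemma e2_0 (a b : R) : ext (ext x0 a) b ord0 = a.
Proof.
have -> : (ord0 : 'I_2) = lift ord_max ord0 by apply: val_inj.
rewrite ext_lift.
have -> : (ord0 : 'I_1) = ord_max by apply: val_inj.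
by rewrite ext_max.
Qed.

Lemma e2_max (a b : R) : ext (ext x0 a) b ord_max = b.
Proof. by rewrite ext_max. Qed.

Lemma graph_trip (f : ('I_2 -> R) -> R) a b y :
  graph f (trip a b y) <-> y = f (ext (ext x0 a) b).
Proof. by rewrite /graph /trip /= ext_max restrict_ext. Qed.

Lemma sub_add n (X : set ('I_n -> R)) g1 g2 :
  subanalytic_fun X g1 -> subanalytic_fun X g2 ->
  subanalytic_fun X (fun x => g1 x + g2 x).
Proof.
move=> d1 d2; apply: (comb (B := graph (fun y : 'I_2 -> R => y ord0 + y ord_max)) d1 d2 (@def_add R)) => x _ y.
by rewrite graph_trip e2_0 e2_max.
Qed.

Lemma sub_mul n (X : set ('I_n -> R)) g1 g2 :
  subanalytic_fun X g1 -> subanalytic_fun X g2 ->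
  subanalytic_fun X (fun x => g1 x * g2 x).
Proof.
move=> d1 d2; apply: (comb (B := graph (fun y : 'I_2 -> R => y ord0 * y ord_max)) d1 d2 (@def_mul R)) => x _ y.
by rewrite graph_trip e2_0 e2_max.
Qed.

Definition p3 : 'I_3 -> 'I_3 := fun i =>
  match unlift ord_max i with
  | None => L ord_max
  | Some j => match unlift ord_max j with
     | None => ord_max
     | Some _ => i end end.

Lemma p3E a b y : trip a b y \o p3 = trip a y b.
Proof.
apply: funext => i; rewrite /comp /p3 /trip; case: (unliftP ord_max i) => [j|] ->; last first.
  by rewrite ?unlift_none /L !ext_lift !ext_max.
rewrite ?liftK; case: (unliftP ord_max j) => [k|] ->; last first.
  by rewrite ?unlift_none /L !ext_lift !ext_max.
rewrite ?liftK; case: (unliftP ord_max k) => [l|] ->; last first.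
  by rewrite ?unlift_none /L !ext_lift !ext_max.
by case: l.
Qed.

Lemma sub_inv n (X : set ('I_n -> R)) g :
  subanalytic X -> subanalytic_fun X g -> (forall x, X x -> 0 < g x) ->
  subanalytic_fun X (fun x => (g x)^-1).
Proof.
move=> dX dg gpos.
apply: (comb (B := [set u : 'I_3 -> R | graph (fun y : 'I_2 -> R => y ord0 * y ord_max) (u \o p3)]) dg (sub_const 1 dX) (def_subst p3 (@def_mul R))) => x Xx y /=.
rewrite p3E graph_trip e2_0 e2_max.
have gx := gpos x Xx; have gx0 : g x != 0 by rewrite gt_eqF.
split.
  by move=> ->; rewrite mulfV.
by move=> E; apply: (mulfI gx0); rewrite mulfV // -E.
Qed.

End Helpers.

Theorem lemma7p1 (R : realType) (n : nat) (X : set ('I_n -> R))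
    (f : ('I_n -> R) -> R) :
  subanalytic X -> inC X f ->
  exists h : ('I_n -> R) -> R,
    subanalytic_fun X h /\ (forall x, X x -> 0 < h x) /\
    (forall x, X x -> `|f x| <= h x).
Proof.
move=> dX; elim => {f}.
- move=> f sf; exists (fun x => f x * f x + 1); split.
    exact: sub_add (sub_mul sf sf) (sub_const 1 dX).
  split=> x _.
    have := sqr_ge0 (f x); rewrite expr2; lra.
  have -> : f x * f x = `|f x| * `|f x| by rewrite -normrM ger0_norm // -expr2 sqr_ge0.
  have := normr_ge0 (f x); set t := `|f x|; nra.
- move=> g sg gpos; exists (fun x => g x + (g x)^-1); split.
    exact: sub_add sg (sub_inv dX sg gpos).
  split=> x Xx; have gx := gpos x Xx; have gi : 0 < (g x)^-1 by rewrite invr_gt0.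
    by rewrite addr_gt0.
  have up : ln (g x) <= g x - 1.
    have := @le_ln1Dx R (g x - 1); rewrite [1 + _]addrC subrK; apply; lra.
  have lo : ln ((g x)^-1) <= (g x)^-1 - 1.
    have := @le_ln1Dx R ((g x)^-1 - 1); rewrite [1 + _]addrC subrK; apply; lra.
  rewrite lnV ?posrE // in lo.
  rewrite ler_norml; apply/andP; split; lra.
- move=> f g _ [h1 [s1 [p1 b1]]] _ [h2 [s2 [p2 b2]]].
  exists (fun x => h1 x + h2 x); split; first exact: sub_add.
  split=> x Xx; first by rewrite addr_gt0 ?p1 ?p2.
  apply: le_trans (ler_normD _ _) _; exact: lerD (b1 x Xx) (b2 x Xx).
- move=> f g _ [h1 [s1 [p1 b1]]] _ [h2 [s2 [p2 b2]]].
  exists (fun x => h1 x * h2 x); split; first exact: sub_mul.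
  split=> x Xx; first by rewrite mulr_gt0 ?p1 ?p2.
  by rewrite normrM ler_pM ?normr_ge0 ?b1 ?b2.
- move=> l f _ [h [sh [ph bh]]].
  exists (fun x => (`|l| + 1) * h x); split.
    exact: sub_mul (sub_const _ dX) sh.
  split=> x Xx; first by rewrite mulr_gt0 ?ph // ltr_pwDr // normr_ge0.
  rewrite normrM; have := bh x Xx; have := ph x Xx; have := normr_ge0 l;
    have := normr_ge0 (f x); nra.
- move=> f g _ [h [sh [ph bh]]] E; exists h; split => //; split => // x Xx.
  by rewrite -E // bh.
Qed.
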